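(* Let $G$ be a finite group with $\mathcal{D}(G)-\mathcal{D}(Z(G))=3$ and $\mathcal{D}(G/Z(G))=1$. Then $G=KH$ where $K\trianglelefteq G$ has prime order $p$, $H$ is a cyclic subgroup of order $q^2$ for a prime $q$ dividing $p-1$, $K\cap H=1$, and $C_H(K)=Z(G)$ has order $q$.
   Context: $\mathcal{D}(X)$ denotes the number of conjugacy classes of nontrivial subgroups $Y$ of the finite group $X$ with $N_X(Y)\neq Y$. $Z(G)$ is the center of $G$. *)

(* Defs.v *)
From mathcomp Require Import all_boot all_fingroup all_solvable.
Set Implicit Arguments.
Unset Strict Implicit.
Unset Printing Implicit Defensive.
Local Open Scope group_scope.

Definition nsn_subgroups (gT : finGroupType) (X : {set gT}) : {set {set gT}} :=
  [set Y : {set gT} | [&& group_set Y, Y \subset X, Y != 1 & 'N_X(Y) != Y]].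

Definition calD (gT : finGroupType) (X : {set gT}) : nat :=
  #|[set Y :^: X | Y in nsn_subgroups X]|.

(* Main.v *)
Require Import Defs.
From mathcomp Require Import all_boot all_fingroup all_solvable.
Set Implicit Arguments.
Unset Strict Implicit.
Unset Printing Implicit Defensive.
Local Open Scope group_scope.


Section Aux.
Variable gT : finGroupType.
Implicit Types (G Y : {group gT}).

Lemma nsnE (X Y : {set gT}) : (Y \in nsn_subgroups X) =
  [&& group_set Y, Y \subset X, Y != 1 & 'N_X(Y) != Y].
Proof. by rewrite inE. Qed.

Lemma nsn_grp (X : {set gT}) (Y : {group gT}) : (gval Y \in nsn_subgroups X) =
  [&& Y \subset X, Y :!=: 1 & 'N_X(Y) != Y].
Proof. by rewrite nsnE groupP. Qed.

Lemma conj_self (A B : {set gT}) : 1 \in B -> A \in A :^: B.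
Proof. by move=> B1; apply/imsetP; exists 1; rewrite ?conjsg1. Qed.

Lemma conj_center_set G (Y : {set gT}) : Y \subset 'Z(G) -> Y :^: G = [set Y].
Proof.
move=> sYZ; apply/setP=> W; rewrite inE; apply/imsetP/eqP=> [[x Gx ->]|->].
  apply/normP; apply: (subsetP (cents_norm _)) Gx.
  rewrite centsC; apply: subset_trans sYZ _; exact: subsetIr.
by exists 1; rewrite ?conjsg1.
Qed.

Definition nconj G (A B : {set gT}) := [forall x in G, A :^ x != B].

Lemma class_neq G (A B : {set gT}) : nconj G A B -> A :^: G != B :^: G.
Proof.
move=> /forall_inP nc; apply/eqP=> eqc.
have : B \in A :^: G by rewrite eqc conj_self.
by case/imsetP=> x Gx eqB; move: (nc x Gx); rewrite eqB eqxx.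
Qed.

Lemma calD_lb G (Y1 Y2 Y3 Y4 : {group gT}) :
  [/\ gval Y1 \in nsn_subgroups G, gval Y2 \in nsn_subgroups G,
      gval Y3 \in nsn_subgroups G & gval Y4 \in nsn_subgroups G] ->
  [/\ ~~ (Y1 \proper 'Z(G)), ~~ (Y2 \proper 'Z(G)),
      ~~ (Y3 \proper 'Z(G)) & ~~ (Y4 \proper 'Z(G))] ->
  [/\ nconj G Y1 Y2, nconj G Y1 Y3, nconj G Y1 Y4 &
      [/\ nconj G Y2 Y3, nconj G Y2 Y4 & nconj G Y3 Y4]] ->
  (calD 'Z(G) + 4 <= calD G)%N.
Proof.
move=> [n1 n2 n3 n4] [p1 p2 p3 p4] [c12 c13 c14 [c23 c24 c34]].
set Z := 'Z(G).
have cc (Y : {set gT}) : Y \in nsn_subgroups Z -> Y :^: Z = [set Y].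
  by rewrite nsnE => /and4P[_ sYZ _ _]; apply: conj_center_set; rewrite /Z (center_idP (center_abelian G)).
pose S1 := [set Y :^: Z | Y in nsn_subgroups Z].
have eqDZ : calD Z = #|S1| by [].
pose T := [set Y :^: G | Y in nsn_subgroups G].
have sS1T : S1 \subset T.
  apply/subsetP=> _ /imsetP[Y nY ->]; rewrite cc //; move: nY; rewrite nsnE => /and4P[gY sYZ ntY nN].
  have [YG eY] : exists YG : {group gT}, Y = YG by exists (Group gY); rewrite /=.
  rewrite eY in sYZ ntY nN gY *.
  apply/imsetP; exists (gval YG); last by rewrite conj_center_set.
  rewrite nsnE gY ntY (subset_trans sYZ (center_sub G)) /=.
  have -> : 'N_G(YG) = G.
    apply/setIidPl; apply: cents_norm.
    rewrite centsC; apply: subset_trans sYZ _; exact: subsetIr.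
  apply/eqP=> eGY; case/eqP: nN; apply/eqP; rewrite eqEsubset subsetI sYZ normG andbT.
  by rewrite -{2}eGY (subset_trans (subsetIl _ _) (center_sub G)).
have notS1 (Y : {group gT}) : ~~ (Y \proper Z) -> Y :^: G \notin S1.
  move=> pY; apply/imsetP=> [[W nW eqW]].
  have YW : (Y : {set gT}) \in [set W] by rewrite -cc // -eqW conj_self.
  move: YW; rewrite inE => /eqP eYW; move: nW; rewrite nsnE -eYW.
  case/and4P=> _ sYZ _ nN; case/negP: pY; rewrite properEneq sYZ andbT.
  by apply: contra nN => /eqP eYZ; rewrite eYZ /Z (setIidPl (normG _)).
have inT (Y : {group gT}) : gval Y \in nsn_subgroups G -> Y :^: G \in T.
  by move=> nY; apply/imsetP; exists (gval Y).
have sub4 : (Y1 :^: G) |: ((Y2 :^: G) |: ((Y3 :^: G) |: ((Y4 :^: G) |: S1))) \subset T.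
  by rewrite !subUset !sub1set !inT.
have := subset_leq_card sub4.
rewrite !cardsU1 !in_setU1 !negb_or (negbTE (class_neq c12)) (negbTE (class_neq c13)).
rewrite (negbTE (class_neq c14)) (negbTE (class_neq c23)) (negbTE (class_neq c24)).
rewrite (negbTE (class_neq c34)) !notS1 //= eqDZ.
move=> h; rewrite /calD -/T; apply: leq_trans h; rewrite addnC /=. by rewrite !add1n.
Qed.


Lemma calD1_conj (X : {group gT}) (A B : {set gT}) : calD X = 1%N ->
  A \in nsn_subgroups X -> B \in nsn_subgroups X -> exists2 x, x \in X & A = B :^ x.
Proof.
move=> /eqP /cards1P [c ec] nA nB.
have hA : A :^: X \in [set c] by rewrite -ec; apply/imsetP; exists A.
have hB : B :^: X \in [set c] by rewrite -ec; apply/imsetP; exists B.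
move: hA hB; rewrite !inE => /eqP eA /eqP eB.
have : A \in B :^: X by rewrite eB -eA conj_self.
by case/imsetP=> x Xx ->; exists x.
Qed.

End Aux.

Section Quo.
Variables (gT : finGroupType) (G : {group gT}).
Local Notation Z := 'Z(G).

Lemma nZsub (Y : {group gT}) : Z \subset Y -> Y \subset G -> Z <| Y.
Proof. by move=> sZY sYG; apply: normalS sZY sYG (center_normal G). Qed.

Lemma quo_nsn (Y : {group gT}) : Z \proper Y -> Y \subset G -> 'N_G(Y) != Y ->
  gval (Y / Z) \in nsn_subgroups (G / Z).
Proof.
move=> pZY sYG nN.
have nZY : Z <| Y := nZsub (proper_sub pZY) sYG.
rewrite nsn_grp quotientS //= quotient_neq1 // pZY /=.
rewrite -quotient_subnormG //.
apply: contra nN => /eqP e; apply/eqP.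
have nZN : Z <| 'N_G(Y)%G.
  apply: nZsub; last exact: subsetIl.
  by rewrite subsetI (subset_trans (proper_sub pZY) sYG) (subset_trans (proper_sub pZY) (normG _)).
exact: (quotient_inj nZN nZY e).
Qed.

Lemma quo_conj (Y1 Y2 : {group gT}) : calD (G / Z) = 1%N ->
  Z \proper Y1 -> Y1 \subset G -> 'N_G(Y1) != Y1 ->
  Z \proper Y2 -> Y2 \subset G -> 'N_G(Y2) != Y2 ->
  exists2 x, x \in G & Y1 :=: Y2 :^ x.
Proof.
move=> D1 p1 s1 n1 p2 s2 n2.
have [xb Gxb e] := calD1_conj D1 (quo_nsn p1 s1 n1) (quo_nsn p2 s2 n2).
case/morphimP: Gxb => x Nx Gx exb; rewrite exb -quotientJ // in e.
exists x => //.
have nZ1 : Z <| Y1 := nZsub (proper_sub p1) s1.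
have sY2x : Y2 :^ x \subset G by rewrite -(conjGid Gx) conjSg.
have nZ2 : Z <| (Y2 :^ x)%G.
  apply: nZsub => //=; rewrite -(normP Nx) conjSg; exact: proper_sub.
exact: (quotient_inj nZ1 nZ2 e).
Qed.

Lemma quo_exists : calD (G / Z) = 1%N ->
  exists Y : {group gT}, [/\ Z \proper Y, Y \subset G & 'N_G(Y) != Y].
Proof.
move=> D1.
have : [set C :^: (G / Z) | C in nsn_subgroups (G / Z)] != set0.
  by rewrite -card_gt0; move: D1; rewrite /calD => ->.
case/set0Pn=> _ /imsetP[C nC _]; move: nC; rewrite nsnE => /and4P[gC sCX ntC nNC].
have [CG eC] : exists CG : {group (coset_of Z)}, C = CG by exists (Group gC).
rewrite eC in sCX ntC nNC.
pose Y := (coset Z @*^-1 CG)%G.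
have eYC : Y / Z = CG by rewrite cosetpreK.
have sYG : Y \subset G by rewrite sub_cosetpre_quo // center_normal.
have sZY : Z \subset Y by apply: sub_cosetpre.
have nZY : Z <| Y := nZsub sZY sYG.
exists Y; split => //.
  by rewrite -quotient_neq1 // eYC.
apply: contra nNC => /eqP e; rewrite -eYC -quotient_subnormG // e.
by rewrite eYC.
Qed.

End Quo.


Section Frob.
Variable gT : finGroupType.

Lemma order_prime_elt (P : {group gT}) a : prime #|P| -> a \in P -> a != 1 -> #[a] = #|P|.
Proof.
move=> pP Pa nta; have /primeP[_ hd] := pP.
have := hd _ (order_dvdG Pa); case/orP=> /eqP // e1.
by move/eqP: e1; rewrite order_eq1 (negbTE nta).
Qed.

Lemma frob_normal (X P Q : {group gT}) : prime #|P| -> P \subset X -> Q \subset X ->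
  'N_X(P) = P -> #|X| = (#|P| * #|Q|)%N -> coprime #|P| #|Q| -> Q <| X.
Proof.
move=> pP sPX sQX nP cX cop.
have ntP : P :!=: 1 by rewrite -cardG_gt1 prime_gt1.
have TI : normedTI P^# X P.
  apply/normedTI_P; split.
  - by have [a Pa nta] := trivgPn _ ntP; apply/set0Pn; exists a; rewrite !inE nta.
  - by rewrite subsetI sPX normD1 normG.
  move=> g Xg /pred0Pn[a /andP[/= Pa Pga]].
  rewrite conjD1g in Pga; move: Pa Pga; rewrite !inE => /andP[nta Pa] /andP[_ Pga].
  have sPPg : P \subset P :^ g.
    apply: contraR nta => nsub.
    have : a \in P :&: (P :^ g)%G by rewrite inE Pa.
    by rewrite (prime_TIg pP nsub) => /set1P ->.
  have ePg : P :^ g = P.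
    by apply/eqP; rewrite eq_sym eqEcard sPPg cardJg leqnn.
  by rewrite -nP inE Xg; apply/normP.
have csize := card_support_normedTI TI.
set cs := class_support _ _ in csize.
have ordcs y : y \in cs -> #[y] = #|P|.
  case/imset2P=> a x Pa _ ->; rewrite orderJ; move: Pa; rewrite !inE => /andP[nta Pa].
  exact: order_prime_elt.
have ncs y (g : gT) : y \in Q :^ g -> y \notin cs.
  move=> Qy; apply/negP=> /ordcs oy.
  have dv : #[y] %| #|Q| by rewrite -(cardJg Q g) order_dvdG.
  rewrite oy in dv; have := coprime_dvdr dv cop.
  by rewrite /coprime gcdnn => /eqP e1; rewrite e1 in pP.
have scs : cs \subset X.
  by apply/subsetP=> _ /imset2P[a x Pa Xx ->]; rewrite groupJ // (subsetP sPX) //; move: Pa; rewrite inE => /andP[].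
have eX : cs :|: Q = X.
  apply/eqP; rewrite eqEcard subUset scs sQX /=.
  rewrite cardsU.
  have -> : cs :&: Q = set0.
    apply/setP=> y; rewrite !inE; apply/negP=> /andP[ycs yQ].
    by move: (ncs y 1); rewrite conjsg1 yQ ycs => /(_ isT).
  rewrite cards0 subn0 csize cX.
  have iP : #|X : P| = #|Q|.
    apply/eqP; rewrite -(eqn_pmul2l (prime_gt0 pP)) -cX. 
    by rewrite Lagrange.
  by rewrite iP (cardsD1 1 P) group1 add1n mulSn addnC.
rewrite /normal sQX; apply/subsetP=> g Xg; apply/normP/eqP.
rewrite eqEcard cardJg leqnn andbT; apply/subsetP=> y Qgy.
have : y \in X.
  by rewrite -(conjGid Xg) mem_conjg; rewrite mem_conjg in Qgy; apply: (subsetP sQX).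
by rewrite -eX inE (negbTE (ncs y g Qgy)).
Qed.

End Frob.

Lemma two_primes_1 (n t1 t2 : nat) : t1 != t2 -> t1.-nat n -> t2.-nat n -> n = 1%N.
Proof.
move=> ne h1 h2; apply: (pnat_1 h1); apply: (@pi_pnat _ t2 n h2).
by rewrite !inE eq_sym.
Qed.

Section PG.
Variable hT : finGroupType.

Lemma pgroup_calD (X : {group hT}) (t : nat) : t.-group X -> ~~ cyclic X -> calD X = 1%N -> False.
Proof.
move=> pX ncX D1.
have ntX : X :!=: 1 by apply: contraNneq ncX => ->; exact: cyclic1.
have [M1 maxM1 _] := maxgroup_exists (etrans (proper1G X) ntX) (gP := [pred M : {group hT} | M \proper X]).
have pM1 : M1 \proper X := maxgroupp maxM1.
have [x Xx nM1x] : exists2 x, x \in X & x \notin M1.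
  by apply/subsetPn; rewrite (proper_subn pM1).
have pxX : <[x]> \proper X.
  rewrite properEneq cycle_subG Xx andbT; apply: contraNneq ncX => <-; exact: cycle_cyclic.
have [M2 maxM2 sxM2] := maxgroup_exists pxX (gP := [pred M : {group hT} | M \proper X]).
have pM2 : M2 \proper X := maxgroupp maxM2.
have nM1 : M1 <| X := p_maximal_normal pX maxM1.
have nM2 : M2 <| X := p_maximal_normal pX maxM2.
have [prt _ _] := pgroup_pdiv pX ntX.
have ntM (M : {group hT}) : maximal M X -> M :!=: 1.
  move=> maxM; apply/eqP=> M1e; have := p_maximal_index pX maxM.
  rewrite M1e indexg1 => cX; case/negP: ncX; apply: prime_cyclic; by rewrite cX.
have inN (M : {group hT}) : maximal M X -> M <| X -> gval M \in nsn_subgroups X.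
  move=> maxM nMX; rewrite nsn_grp ntM // (proper_sub (maxgroupp maxM)) /=.
  rewrite (setIidPl (normal_norm nMX)); apply: contraTneq (maxgroupp maxM) => ->.
  by rewrite properxx.
have [g Xg e] := calD1_conj D1 (inN _ maxM1 nM1) (inN _ maxM2 nM2).
rewrite (normP (subsetP (normal_norm nM2) g Xg)) in e.
by case/negP: nM1x; rewrite e -cycle_subG.
Qed.
End PG.


Section Main.
Variables (gT : finGroupType) (G : {group gT}).
Hypothesis D2 : calD G = (calD 'Z(G) + 3)%N.
Hypothesis DX : calD (G / 'Z(G)) = 1%N.
Local Notation Z := 'Z(G).

Definition typeD (Y : {set gT}) := [&& Y != 1, ~~ (Y \subset Z) & ~~ (Z \subset Y)].

Lemma ZJ x : x \in G -> Z :^ x = Z.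
Proof. by move=> Gx; apply/normP; apply: (subsetP (normal_norm (center_normal G))). Qed.

Lemma nabG : ~~ abelian G.
Proof.
apply/negP=> /center_idP eZ; have [Yc [pZY sYG _]] := quo_exists DX.
by move: (proper_subn pZY); rewrite eZ sYG.
Qed.

Lemma ZneG : Z != G :> {set gT}.
Proof. by apply: contra nabG => /eqP <-; exact: center_abelian. Qed.

Lemma H2conj (Y1 Y2 : {group gT}) :
  Z \proper Y1 -> Y1 \subset G -> 'N_G(Y1) != Y1 ->
  Z \proper Y2 -> Y2 \subset G -> 'N_G(Y2) != Y2 -> #|Y1| = #|Y2|.
Proof.
move=> p1 s1 n1 p2 s2 n2; have [x Gx ->] := quo_conj DX p1 s1 n1 p2 s2 n2.
exact: cardJg.
Qed.

Lemma classJ (A : {set gT}) x : x \in G -> (A :^ x) :^: G = A :^: G.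
Proof. by move=> Gx; rewrite conjugates_conj lcoset_id. Qed.

Lemma Zne1 : Z :!=: 1.
Proof.
apply/negP=> /eqP Z1; have [Yc [pZY sYG nY]] := quo_exists DX.
have le1 : (calD G <= 1)%N.
  rewrite /calD; apply: (@leq_trans #|[set gval Yc :^: G]|); last by rewrite cards1.
  apply: subset_leq_card; apply/subsetP=> _ /imsetP[C nC ->].
  move: nC; rewrite nsnE => /and4P[gC sCG ntC nNC].
  have [CG eC] : exists CG : {group gT}, C = CG by exists (Group gC).
  rewrite eC in sCG ntC nNC *.
  have pZC : Z \proper CG by rewrite Z1 proper1G.
  have [x Gx ->] := quo_conj DX pZC sCG nNC pZY sYG nY.
  by rewrite classJ // inE.
by move: le1; rewrite D2 addn3.
Qed.

Lemma nsnZ : gval Z \in nsn_subgroups G.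
Proof.
rewrite nsn_grp center_sub Zne1 /= (setIidPl (normal_norm (center_normal G))).
by rewrite eq_sym ZneG.
Qed.

Lemma nsn_typeD (Y : {group gT}) : Y \subset G -> typeD Y -> gval Y \in nsn_subgroups G.
Proof.
move=> sYG /and3P[ntY nYZ nZY]; rewrite nsn_grp sYG ntY /=.
apply: contra nZY => /eqP eN; rewrite -eN subsetI center_sub /=.
apply: cents_norm; exact: subset_trans (subsetIr G 'C(G)) (centS sYG).
Qed.

Lemma D1 (Y1 Y2 : {group gT}) : Y1 \subset G -> Y2 \subset G -> typeD Y1 -> typeD Y2 ->
  #|Y1| = #|Y2|.
Proof.
move=> s1 s2 t1 t2.
case: (boolP (nconj G Y1 Y2)) => [nc | ]; last first.
  by case/forall_inPn=> x Gx /negPn/eqP <-; rewrite cardJg.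
have [Yc [pZY sYG nY]] := quo_exists DX.
have nYc : gval Yc \in nsn_subgroups G by rewrite nsn_grp sYG nY -proper1G (proper_trans _ pZY) // proper1G Zne1.
have t1' := t1; have t2' := t2.
move: t1 t2 => /and3P[nt1 n1Z nZ1] /and3P[nt2 n2Z nZ2].
have ncZ (Y : {group gT}) : Y != Z :> {set gT} -> nconj G Z Y.
  by move=> ne; apply/forall_inP=> x Gx; rewrite ZJ // eq_sym.
have ncYc (Y : {group gT}) : ~~ (Z \subset Y) -> nconj G Yc Y.
  move=> nZY; apply/forall_inP=> x Gx; apply: contra nZY => /eqP <-.
  by rewrite -(ZJ Gx) conjSg proper_sub.
have npZ (Y : {group gT}) : ~~ (Y \subset Z) -> ~~ (Y \proper Z).
  by apply: contra; apply: proper_sub.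
have pYc : ~~ (Yc \proper Z).
  by apply: contraTN pZY => /proper_sub sYZ; rewrite properE sYZ andbF.
have c12 : nconj G Z Yc by apply: ncZ; apply: contraTneq pZY => ->; rewrite properxx.
have c13 : nconj G Z Y1 by apply: ncZ; apply: contraNneq n1Z => ->.
have c14 : nconj G Z Y2 by apply: ncZ; apply: contraNneq n2Z => ->.
have := calD_lb (Y1 := [group of Z]) (Y2 := Yc) (Y3 := Y1) (Y4 := Y2)
  (And4 nsnZ nYc (nsn_typeD s1 t1') (nsn_typeD s2 t2'))
  (And4 (negbT (properxx _)) pYc (npZ _ n1Z) (npZ _ n2Z))
  (And4 c12 c13 c14 (And3 (ncYc _ nZ1) (ncYc _ nZ2) nc)).
by rewrite D2 leq_add2l.
Qed.



Lemma nZG : G \subset 'N(Z).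
Proof. exact: normal_norm (center_normal G). Qed.

Lemma tElt (t : nat) : prime t -> t %| #|G : Z| -> exists2 g, g \in G & (g \notin Z) && t.-elt g.
Proof.
move=> pt dv; rewrite -(card_quotient nZG) in dv.
have [xb Gxb oxb] := Cauchy pt dv.
case/morphimP: Gxb => x Nx Gx exb.
have sxG : <[x]> \subset G by rewrite cycle_subG.
exists x.`_t; first exact: (subsetP sxG _ (cycle_constt t x)).
rewrite p_elt_constt andbT; apply/negP=> Zg.
have : coset Z x.`_t = 1 by apply: coset_id.
rewrite (morph_constt (coset_morphism Z)) //= -exb constt_p_elt; last first.
  by rewrite /p_elt oxb pnat_id.
by move/eqP; rewrite -order_eq1 oxb => /eqP e1; rewrite e1 in pt.
Qed.

Lemma minElt (g : gT) : g \notin Z -> exists g0, [/\ g0 \in <[g]>, g0 \notin Z &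
  forall h, h \in <[g0]> -> h \notin Z -> <[h]> = <[g0]>].
Proof.
move=> nZg.
pose P n := [exists h in <[g]>, (h \notin Z) && (#[h] == n)].
have exP : exists n, P n by exists #[g]; apply/exists_inP; exists g; [exact: cycle_id | rewrite nZg eqxx].
case: (ex_minnP exP) => n /exists_inP[g0 g0g /andP[nZg0 /eqP og0]] minn.
exists g0; split=> // h hg0 nZh.
have sh : <[h]> \subset <[g0]> by rewrite cycle_subG.
apply/eqP; rewrite eqEcard sh /= -/(order h) -/(order g0) og0.
apply: minn; apply/exists_inP; exists h; rewrite ?nZh ?eqxx //.
have sg0 : <[g0]> \subset <[g]> by rewrite cycle_subG.
exact: (subsetP sg0 _ hg0).
Qed.


Lemma pack (t : nat) : prime t -> t %| #|G : Z| -> exists g0, [/\ g0 \in G, g0 \notin Z, t.-elt g0 &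
  forall h, h \in <[g0]> -> h \notin Z -> <[h]> = <[g0]>].
Proof.
move=> pt dv; have [g Gg /andP[nZg tg]] := tElt pt dv.
have [g0 [g0g nZg0 mg0]] := minElt nZg.
exists g0; split=> //.
  have sgG : <[g]> \subset G by rewrite cycle_subG.
  exact: (subsetP sgG _ g0g).
exact: (mem_p_elt (tg : t.-group <[g]>) g0g).
Qed.

Lemma S4 : exists p q y w, [/\ [/\ prime p, prime q & p != q],
  [/\ y \in G, p.-elt y, typeD <[y]> & forall h, h \in <[y]> -> h \notin Z -> <[h]> = <[y]>] &
  [/\ w \in G, w \notin Z, q.-elt w & Z \subset <[w]>]].
Proof.
have sZG := center_sub G.
have n1 : 1 < #|G : Z|.
  by rewrite indexg_gt1; apply: contra ZneG => sGZ; rewrite eqEsubset sZG sGZ.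
set n := #|G : Z| in n1 *.
have pt1 := pdiv_prime n1; set t1 := pdiv n in pt1.
have nt1 : ~~ t1.-nat n.
  apply/negP=> h; apply: (pgroup_calD (X := (G / Z)%G) (t := t1)) DX.
  - by rewrite /pgroup card_quotient ?nZG.
  - by apply: contra nabG; exact: cyclic_center_factor_abelian.
have m1 : 1 < (n`_t1^')%N.
  rewrite ltnNge; apply: contra nt1 => m1.
  have n0 : 0 < n by apply: ltnW.
  have e1 : (n`_t1^')%N = 1%N by apply/eqP; rewrite eqn_leq m1 part_gt0.
  by rewrite -(partnC t1 n0) e1 muln1 part_pnat.
have pt2 := pdiv_prime m1; set t2 := pdiv _ in pt2.
have dt2 : t2 %| n := dvdn_trans (pdiv_dvd _) (dvdn_part _ _).
have ne12 : t1 != t2.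
  have := (pnatP _ (ltnW m1)) (part_pnat (t1^') n) _ pt2 (pdiv_dvd _).
  by rewrite !inE eq_sym.
have [g1 [Gg1 nZg1 e1 m1']] := pack pt1 (pdiv_dvd _).
have [g2 [Gg2 nZg2 e2 m2']] := pack pt2 dt2.
have tD (g : gT) : g \notin Z -> ~~ (Z \subset <[g]>) -> typeD <[g]>.
  move=> nZg nZs; rewrite /typeD nZs cycle_subG nZg andbT.
  by rewrite cycle_eq1 andbT; apply: contraNneq nZg => ->; rewrite group1.
case: (boolP (Z \subset <[g1]>)) => s1; case: (boolP (Z \subset <[g2]>)) => s2.
- case/negP: Zne1; rewrite trivg_card1; apply/eqP; apply: (two_primes_1 ne12).
    exact: pgroupS s1 e1.
  exact: pgroupS s2 e2.
- by exists t2, t1, g2, g1; split; rewrite // ?tD // eq_sym.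
- by exists t1, t2, g1, g2; split; rewrite // ?tD.
have := D1 _ _ (tD _ nZg1 s1) (tD _ nZg2 s2); rewrite !cycle_subG => /(_ Gg1 Gg2) e.
have : #[g1] = 1%N by apply: (two_primes_1 ne12); rewrite // /order e.
by move/eqP; rewrite order_eq1 => /eqP g11; rewrite g11 group1 in nZg1.
Qed.


Section Final.
Variables (p q : nat) (y w : gT).
Hypotheses (pp : prime p) (pq : prime q) (npq : p != q).
Hypotheses (Gy : y \in G) (ey : p.-elt y) (tDy : typeD <[y]>)
  (my : forall h, h \in <[y]> -> h \notin Z -> <[h]> = <[y]>).
Hypotheses (Gw : w \in G) (nZw : w \notin Z) (ew : q.-elt w) (sZw : Z \subset <[w]>).

Lemma qZ : q.-group Z.
Proof. exact: pgroupS sZw ew. Qed.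

Lemma nZy : y \notin Z.
Proof. by case/and3P: tDy => _; rewrite cycle_subG. Qed.

Lemma pq_nat (n : nat) : p.-nat n -> q.-nat n -> n = 1%N.
Proof. exact: two_primes_1 npq. Qed.

Lemma prime_qnat (r t : nat) : prime r -> t.-nat r -> r = t.
Proof.
move=> pr /(pnatP _ (prime_gt0 pr)) h; have := h r pr (dvdnn r).
by rewrite inE => /eqP.
Qed.

Lemma oy : #[y] = p.
Proof.
have nty : y != 1 by apply: contraNneq nZy => ->; rewrite group1.
have ntY : <[y]> != 1 :> {set gT} by rewrite cycle_eq1.
have [_ dp _] := pgroup_pdiv (ey : p.-group <[y]>) ntY.
have {}dp : p %| #[y] := dp.
have oyp := orderXdiv dp.
have o0 : 0 < #[y] := order_gt0 y.
case: (boolP (y ^+ p \in Z)) => yZ; last first.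
  have := my (mem_cycle y p) yZ => /(congr1 (fun A : {set gT} => #|A|)).
  rewrite -/(order (y ^+ p)) -/(order y) oyp => e.
  by have := ltn_Pdiv (prime_gt1 pp) o0; rewrite e ltnn.
have e1 : #[y ^+ p] = 1%N.
  apply: pq_nat; first exact: p_eltX.
  exact: mem_p_elt qZ yZ.
by rewrite -(divnK dp) -oyp e1 mul1n.
Qed.

Definition K := <[y]>%G.

Lemma cK : #|K| = p. Proof. exact: oy. Qed.

Lemma exz : exists2 z, z \in Z & #[z] = q.
Proof.
have [_ dq _] := pgroup_pdiv qZ Zne1.
by have [z Zz oz] := Cauchy pq dq; exists z.
Qed.

Lemma copq : coprime p q.
Proof. by rewrite prime_coprime // dvdn_prime2. Qed.

Lemma cZ : #|Z| = q.
Proof.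
have [z Zz oz] := exz.
have czG : z \in 'C(G) by move: Zz; rewrite inE => /andP[].
have cyz : commute y z by apply: commute_sym; apply: (centP czG).
have eW : <[y * z]> = <[y]> * <[z]> by rewrite cycleM // oy oz copq.
have cW : #|<[y * z]>| = (p * q)%N.
  by rewrite eW TI_cardMg ?coprime_TIg -/(order y) -/(order z) ?oy ?oz ?copq.
have yW : y \in <[y * z]> by rewrite eW -{1}(mulg1 y) mem_mulg ?cycle_id ?group1.
have sWG : <[y * z]> \subset G.
  by rewrite cycle_subG groupM // (subsetP (center_sub G)).
have sZW : Z \subset <[y * z]>.
  apply/negPn/negP => nZW.
  have tDW : typeD <[y * z]>.
    rewrite /typeD nZW andbT -cardG_gt1 cW.
    rewrite (ltn_trans (prime_gt1 pp)) ?ltn_Pmulr ?prime_gt0 ?prime_gt1 //=.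
    by apply: contraNN nZy => sWZ; apply: (subsetP sWZ).
  have syG : <[y]> \subset G by rewrite cycle_subG.
  have := D1 sWG syG tDW tDy.
  rewrite cW -/(order y) oy => e.
  by have := ltn_Pmulr (prime_gt1 pq) (prime_gt0 pp); rewrite e ltnn.
have dZ : #|Z| %| p * q by rewrite -cW cardSg.
have [_ _ [m cZm]] := pgroup_pdiv qZ Zne1.
have cop : coprime #|Z| p by rewrite cZm coprime_pexpl // prime_coprime // dvdn_prime2 // eq_sym.
rewrite (Gauss_dvdr _ cop) in dZ.
have /primeP[_ hd] := pq; case/orP: (hd _ dZ) => /eqP // e1.
by case/negP: Zne1; rewrite trivg_card1 e1.
Qed.

Lemma ZeqZ : exists2 z, z \in Z & <[z]> = Z.
Proof.
have [z Zz oz] := exz; exists z => //.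
by apply/eqP; rewrite eqEcard cycle_subG Zz cZ -/(order z) oz /=.
Qed.


Lemma syG : <[y]> \subset G. Proof. by rewrite cycle_subG. Qed.

Lemma exKZ : exists KZ : {group gT}, [/\ KZ :=: K * Z, #|KZ| = (p * q)%N, KZ \subset G & abelian KZ].
Proof.
have [z Zz ez] := ZeqZ.
have czG : z \in 'C(G) by move: Zz; rewrite inE => /andP[].
have cyz : commute y z by apply: commute_sym; apply: (centP czG).
have oz : #[z] = q by rewrite /order ez cZ.
have eW : <[y * z]> = <[y]> * <[z]> by rewrite cycleM // oy oz copq.
exists <[y * z]>%G; split => //=.
- by rewrite eW ez.
- by rewrite eW TI_cardMg ?coprime_TIg -/(order y) -/(order z) ?oy ?oz ?copq.
- by rewrite cycle_subG groupM // (subsetP (center_sub G)).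
exact: cycle_abelian.
Qed.

Lemma sylK : p.-Sylow(G) K.
Proof.
have [P sylP sKP] := Sylow_superset syG ey.
have sPG : P \subset G := pHall_sub sylP.
have pP : p.-group P := pHall_pgroup sylP.
have tDP : typeD P.
  case/and3P: tDy => nt nsZ _; rewrite /typeD.
  apply/and3P; split.
  - by apply: contraNneq nt => P1; apply/eqP/trivgP; rewrite -P1.
  - by apply: contra nsZ; apply: subset_trans.
  apply/negP=> sZP; case/negP: Zne1; rewrite trivg_card1; apply/eqP.
  by apply: pq_nat; [exact: pgroupS sZP pP | exact: qZ].
have e := D1 sPG syG tDP tDy.
have -> : K = P by apply/val_inj/eqP; rewrite eqEcard sKP e /=.
exact: sylP.
Qed.

Lemma primesG r : prime r -> r %| #|G| -> r = p \/ r = q.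
Proof.
move=> pr dr; have [g Gg og] := Cauchy pr dr.
case: (eqVneq r q) => [-> | nrq]; first by right.
left; have sgG : <[g]> \subset G by rewrite cycle_subG.
have nZg : g \notin Z.
  apply/negP=> Zg; have := order_dvdG Zg; rewrite og cZ dvdn_prime2 //.
  by rewrite (negbTE nrq).
have tDg : typeD <[g]>.
  rewrite /typeD cycle_subG nZg /= cycle_eq1 -order_eq1 og gtn_eqF ?prime_gt1 //=.
  apply/negP=> sZg; have := cardSg sZg; rewrite cZ -/(order g) og dvdn_prime2 //.
  by rewrite eq_sym (negbTE nrq).
have := D1 sgG syG tDg tDy; rewrite -/(order g) -/(order y) og oy => ->.
by [].
Qed.

Lemma exQ : exists Q : {group gT}, [/\ q.-Sylow(G) Q, Z \proper Q &
  forall W : {group gT}, W \subset Q -> W :!=: 1 -> Z \subset W].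
Proof.
have swG : <[w]> \subset G by rewrite cycle_subG.
have [Q sylQ swQ] := Sylow_superset swG ew.
have sQG : Q \subset G := pHall_sub sylQ.
have qQ : q.-group Q := pHall_pgroup sylQ.
exists Q; split => //.
  rewrite properEneq (subset_trans sZw swQ) andbT.
  apply: contraNneq nZw => ->; exact: (subsetP swQ _ (cycle_id w)).
move=> W sWQ ntW; apply/negPn/negP => nZW.
have sWG := subset_trans sWQ sQG.
have qW : q.-group W := pgroupS sWQ qQ.
have nWZ : ~~ (W \subset Z).
  apply/negP=> sWZ; case/negP: nZW.
  have /primeP[_ hd] := pq; have := hd _ (etrans (congr1 _ (esym cZ)) (cardSg sWZ)).
  case/orP=> /eqP cW.
    by case/negP: ntW; rewrite trivg_card1 cW.
  have eWZ : W :=: Z by apply/eqP; rewrite eqEcard sWZ cZ cW leqnn.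
  by rewrite eWZ.
have tDW : typeD W by rewrite /typeD ntW nWZ.
have := D1 sWG syG tDW tDy; rewrite -/(order y) oy => cW.
have := card_pgroup qW; rewrite cW => e.
have pqn : q.-nat p by rewrite -cW.
by move/eqP: npq; rewrite (prime_qnat pp pqn).
Qed.


Lemma cardG (Q : {group gT}) : q.-Sylow(G) Q -> #|G| = (p * #|Q|)%N.
Proof.
move=> sylQ.
set n := #|G|.
have n0 : 0 < n := cardG_gt0 G.
rewrite -(partnC p n0) -(card_Hall sylK) cK (card_Hall sylQ); congr (_ * _)%N.
set m := (n`_p^')%N.
have m0 : 0 < m := part_gt0 _ _.
rewrite -(partnC q m0) partn_part; last first.
  by move=> x; rewrite !inE => /eqP ->; rewrite eq_sym.
suff -> : (m`_q^')%N = 1%N by rewrite muln1.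
apply/eqP; rewrite eqn_leq part_gt0 andbT leqNgt; apply/negP=> m1.
have pr := pdiv_prime m1; set r := pdiv _ in pr.
have drm : r %| m := dvdn_trans (pdiv_dvd _) (dvdn_part _ _).
have drn : r %| n := dvdn_trans drm (dvdn_part _ _).
have rq := (pnatP _ (ltnW m1)) (part_pnat (q^') m) _ pr (pdiv_dvd _).
have rp := (pnatP _ m0) (part_pnat (p^') n) _ pr drm.
move: rq rp; rewrite !inE; case: (primesG pr drn) => ->; rewrite eqxx //.
Qed.


Lemma finalC : exists (K H : {group gT}),
    [/\ [/\ prime p, prime q, K <| G & #|K| = p],
        [/\ H \subset G, cyclic H, #|H| = (q ^ 2)%N & q %| p.-1],
        G :=: K * H, K :&: H = 1 &
        'C_H(K) = 'Z(G) /\ #|'Z(G)| = q].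
Proof.
have [Q [sylQ pZQ UQ]] := exQ.
have sQG : Q \subset G := pHall_sub sylQ.
have qQ : q.-group Q := pHall_pgroup sylQ.
have cG := cardG sylQ.
have [KZ [eKZ cKZ sKZG aKZ]] := exKZ.
have sKG : K \subset G := syG.
have nZG' := center_normal G.
have sZQ := proper_sub pZQ.
have ntQ : Q :!=: 1 by apply: contraTneq pZQ => ->; rewrite properE sub1G andbF.
have copQ : coprime p #|Q|.
  have [_ _ [m ->]] := pgroup_pdiv qQ ntQ; exact: coprimeXr copq.
have TI : K :&: Q = 1 by apply: coprime_TIg; rewrite cK.
have eG : K * Q = G.
  by apply/eqP; rewrite eqEcard mul_subG //= TI_cardMg // cK cG leqnn.
set k := logn q #|Q|.
have cQ : #|Q| = (q ^ k)%N := card_pgroup qQ.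
have k1 : 1 < k.
  have := proper_card pZQ; rewrite cZ cQ -{1}(expn1 q) ltn_exp2l //; exact: prime_gt1.
have sZKZ : Z \subset KZ by rewrite eKZ mulG_subr.
have sKKZ : K \subset KZ by rewrite eKZ mulG_subl.
have pZKZ : Z \proper KZ.
  by rewrite properEcard sZKZ cZ cKZ ltn_Pmull ?prime_gt1 ?prime_gt0.
have nZKZ : Z <| KZ := nZsub sZKZ sKZG.
have nZQ : Z <| Q := nZsub sZQ sQG.
have frob : 'N_G(KZ) = KZ -> Q <| G.
  move=> NKZ.
  have iKZ : #|KZ : Z| = p.
    by apply/eqP; rewrite -(eqn_pmul2l (prime_gt0 pq)) -{1}cZ Lagrange // cKZ mulnC.
  have iG : #|G : Z| = (p * #|Q : Z|)%N.
    apply/eqP; rewrite -(eqn_pmul2l (prime_gt0 pq)) -{1}cZ Lagrange ?center_sub //.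
    by rewrite cG -(Lagrange sZQ) cZ mulnCA.
  have nKZ : KZ \subset 'N(Z) := subset_trans sKZG nZG.
  have nQZ : Q \subset 'N(Z) := subset_trans sQG nZG.
  have fn := frob_normal (X := (G / Z)%G) (P := (KZ / Z)%G) (Q := (Q / Z)%G).
  have nQ : (Q / Z)%G <| (G / Z)%G.
    apply: fn.
    - by rewrite /= card_quotient // iKZ.
    - exact: quotientS.
    - exact: quotientS.
    - by rewrite /= -quotient_subnormG // NKZ.
    - by rewrite /= !card_quotient // ?iKZ ?iG // nZG.
    rewrite /= !card_quotient // iKZ.
    exact: coprime_dvdr (dvdn_indexg _ _) copQ.
  by rewrite -(quotientGK nZQ) -(quotientGK nZG') cosetpre_normal.
have ntG : 'N_G(Q) != Q -> 'N_G(Q) = G -> True by [].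
have k2 : k = 2.
  apply/eqP; rewrite eqn_leq k1 andbT leqNgt; apply/negP=> k3.
  have [W [sWQ nWQ cW]] := normal_pgroup qQ (normal_refl Q) (ltnW k3 : 2 <= logn q #|Q|).
  have ntW : W :!=: 1 by rewrite -cardG_gt1 cW (ltn_exp2l 0) ?prime_gt1.
  have sZW := UQ W sWQ ntW.
  have sWG := subset_trans sWQ sQG.
  have pZW : Z \proper W by rewrite properEcard sZW cZ cW -{1}(expn1 q) ltn_exp2l ?prime_gt1.
  have nNW : 'N_G(W) != W.
    apply/eqP=> eN; have : Q \subset W by rewrite -eN subsetI sQG normal_norm.
    move/subset_leq_card; rewrite cW cQ leq_exp2l ?prime_gt1 //.
    by rewrite leqNgt k3.
  have NKZ : 'N_G(KZ) = KZ.
    apply/eqP/negPn/negP=> nN; have := H2conj pZKZ sKZG nN pZW sWG nNW.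
    rewrite cKZ cW mulnC expnS expn1 => /eqP; rewrite eqn_pmul2l ?prime_gt0 //.
    by move/eqP=> e; move: npq; rewrite e eqxx.
  have nQG := frob NKZ.
  have pZQ' := pZQ.
  have nNQ : 'N_G(Q) != Q.
    rewrite (setIidPl (normal_norm nQG)); apply/eqP=> eGQ.
    have := cG; rewrite eGQ -{1}(mul1n #|Q|) => /eqP; rewrite eqn_pmul2r ?cardG_gt0 //.
    by move/eqP=> p1; move: pp; rewrite -p1.
  have := H2conj pZQ sQG nNQ pZW sWG nNW; rewrite cQ cW => /eqP.
  by rewrite eqn_exp2l ?prime_gt1 // => /eqP k2'; rewrite k2' ltnn in k3.
rewrite k2 in cQ.
have aQ : abelian Q := card_p2group_abelian pq cQ.
have cZK : Z \subset 'C(K) := subset_trans (subsetIr G 'C(G)) (centS sKG).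
have nKG : K <| G.
  apply/negPn/negP=> nnK.
  set N := 'N_G(K).
  have sKZN : KZ \subset N.
    rewrite subsetI sKZG eKZ mul_subG ?normG //; exact: cents_norm.
  have dN : #|N| %| #|G| by apply: cardSg; exact: subsetIl.
  have dKZ : #|KZ| %| #|N| := cardSg sKZN.
  have NneG : N != G :> {set gT}.
    apply: contra nnK => /eqP eN; rewrite /normal sKG /= -eN; exact: subsetIr.
  have eN : N = KZ.
    apply/eqP; rewrite eq_sym eqEcard sKZN /=.
    case/dvdnP: dKZ => j cN.
    move: dN; rewrite cG cQ cN cKZ.
    have -> : (p * q ^ 2 = q * (p * q))%N by rewrite [RHS]mulnCA mulnn.
    rewrite dvdn_pmul2r ?muln_gt0 ?prime_gt0 //.
    have /primeP[_ hd] := pq; move/hd; case/orP=> /eqP ej; rewrite ej ?mul1n //.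
    case/negP: NneG; rewrite eqEcard subsetIl /= cG cQ cN cKZ ej.
    by rewrite [X in _ <= X]mulnCA mulnn.
  have hallK : p.-Hall(KZ) K := pHall_subl sKKZ sKZG sylK.
  have nKKZ : K <| KZ by rewrite -sub_abelian_normal.
  have eOp : 'O_p(KZ) = K := normal_Hall_pcore hallK nKKZ.
  have NKZ : 'N_G(KZ) = KZ.
    apply/eqP; rewrite eqEsubset subsetI sKZG normG andbT -{2}eN /N subsetI subsetIl /=.
    by rewrite andbT -eOp; apply: char_norm_trans (pcore_char p KZ) (subsetIr G 'N(KZ)).
  have nQG := frob NKZ.
  have nQK : K \subset 'N(Q) := subset_trans sKG (normal_norm nQG).
  have copQK : coprime #|Q| #|K| by rewrite coprime_sym cK.
  have TIc := coprime_abel_cent_TI nQK copQK aQ.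
  have sRQ : [~: Q, K] \subset Q by rewrite commg_subl.
  have R1 : [~: Q, K] = 1.
    apply/eqP/negPn/negP=> ntR.
    have sZR := UQ _ sRQ ntR.
    by case/negP: Zne1; rewrite -subG1 -TIc subsetI sZR cZK.
  have cQK : Q \subset 'C(K) by apply/commG1P.
  case/negP: nnK; rewrite /normal sKG -eG mul_subG ?normG //; exact: cents_norm.
have cQK : 'C_Q(K) = Z.
  have sZC : Z \subset 'C_Q(K) by rewrite subsetI sZQ cZK.
  have sCQ : 'C_Q(K) \subset Q := subsetIl _ _.
  have := cardSg sCQ; rewrite cQ => /(dvdn_pfactor _ _ pq)[j j2 cC].
  move: j2; rewrite leq_eqVlt ltnS leq_eqVlt ltnS leqn0 => /or3P[] /eqP ej; rewrite ej in cC.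
  - case/negP: nabG; rewrite -eG abelianM cycle_abelian aQ /=.
    have eC : 'C_Q(K) == Q :> {set gT} by rewrite eqEcard sCQ cC cQ leqnn.
    by rewrite -(eqP eC) subsetIr.
  - by apply/eqP; rewrite eq_sym eqEcard sZC cC cZ expn1 leqnn.
  - have := subset_leq_card sZC; rewrite cC cZ expn0 leqNgt prime_gt1 //.
have cycQ : cyclic Q.
  have [x Qx nZx] : exists2 x, x \in Q & x \notin Z by apply/subsetPn; exact: proper_subn pZQ.
  have sxQ : <[x]> \subset Q by rewrite cycle_subG.
  have ntx : <[x]> :!=: 1.
    by rewrite cycle_eq1; apply: contraNneq nZx => ->; rewrite group1.
  have sZx := UQ _ sxQ ntx.
  have := cardSg sxQ; rewrite cQ => /(dvdn_pfactor _ _ pq)[j j2 cx].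
  move: j2; rewrite leq_eqVlt ltnS leq_eqVlt ltnS leqn0 => /or3P[] /eqP ej; rewrite ej in cx.
  - apply/cyclicP; exists x; apply/eqP; rewrite eq_sym eqEcard sxQ cQ cx leqnn //.
  - case/negP: nZx; have exZ : <[x]> == Z :> {set gT}.
      by rewrite eq_sym eqEcard sZx cx cZ expn1 leqnn.
    by rewrite -(eqP exZ) cycle_id.
  - have := subset_leq_card sZx; rewrite cx cZ expn0 leqNgt prime_gt1 //.
have dq : q %| p.-1.
  have sQN : Q \subset 'N(K) := subset_trans sQG (normal_norm nKG).
  have := cardSg (Aut_conj_aut K Q).
  rewrite card_Aut_cyclic ?cycle_cyclic // cK totient_prime // card_morphim.
  rewrite ker_conj_aut (setIidPr sQN) -indexgI cQK.
  have -> : #|Q : Z| = q.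
    by apply/eqP; rewrite -(eqn_pmul2l (prime_gt0 pq)) -{1}cZ Lagrange // cQ mulnn.
  by [].
by exists K, Q; split; rewrite ?cK ?cZ.
Qed.

End Final.

Lemma main_res : exists (K H : {group gT}) (p q : nat),
    [/\ [/\ prime p, prime q, K <| G & #|K| = p],
        [/\ H \subset G, cyclic H, #|H| = (q ^ 2)%N & q %| p.-1],
        G :=: K * H, K :&: H = 1 &
        'C_H(K) = 'Z(G) /\ #|'Z(G)| = q].
Proof.
have [p [q [y [w [[pp pq npq] [Gy ey tDy my] [Gw nZw ew sZw]]]]]] := S4.
have [K [H hK]] := finalC pp pq npq Gy ey tDy my Gw nZw ew sZw.
by exists K, H, p, q.
Qed.

End Main.


Theorem mainTheorem12 (gT : finGroupType) (G : {group gT}) :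
  calD G = (calD 'Z(G) + 3)%N ->
  calD (G / 'Z(G)) = 1%N ->
  exists (K H : {group gT}) (p q : nat),
    [/\ [/\ prime p, prime q, K <| G & #|K| = p],
        [/\ H \subset G, cyclic H, #|H| = (q ^ 2)%N & q %| p.-1],
        G :=: K * H, K :&: H = 1 &
        'C_H(K) = 'Z(G) /\ #|'Z(G)| = q].
Proof.
move=> D2 DX; exact: (main_res D2 DX).
Qed.
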